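(* Let $q$ be a prime power and let $r\ge2$ and $n$ be even with $n=2m+r$, $m\ge0$. Then $$\frac{p_r(q,n)}{p_0(q,n)}=\frac{c_r(q,n)}{c_0(q,n)}=\frac{q^{r/2}}{\prod_{j=1}^{r}(q^j-1)}\cdot\prod_{j=1}^{r/2}\left(1-\frac{1}{q^{m+j}}\right).$$ In particular, for fixed even $n$ and even $r\ge2$, $p_r(q,n)/p_0(q,n)\sim q^{-r^2/2}$ as $q\to\infty$.
   Context: Let ${\mathbb F}_q$ be the finite field of order $q$. A differential on ${\mathbb F}_q^n$ is a linear map $D$ with $D^2=0$; its homology is $\ker D/\operatorname{im}D$. Let $c(q,n)$ be the number of differentials on ${\mathbb F}_q^n$, $c_r(q,n)$ the number with $r$-dimensional homology, and $p_r(q,n)=c_r(q,n)/c(q,n)$. *)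

(* Defs.v *)
From HB Require Import structures.
From mathcomp Require Import all_boot all_order all_algebra all_field.
Set Implicit Arguments. Unset Strict Implicit. Unset Printing Implicit Defensive.
Import Order.TTheory GRing.Theory Num.Theory.
Local Open Scope ring_scope.

(* A differential on F^n is a linear map D with D^2 = 0; linear maps of F^n
   are represented by n x n matrices (acting on row vectors, MathComp style). *)
Definition is_differential (F : fieldType) (n : nat) (D : 'M[F]_n) : bool :=
  D *m D == 0.

(* Dimension of the homology ker D / im D  =  dim ker D - dim im D
   (im D is a subspace of ker D when D^2 = 0). *)
Definition homology_dim (F : fieldType) (n : nat) (D : 'M[F]_n) : nat :=
  (\rank (kermx D) - \rank D)%N.

Definition c_all (F : finFieldType) (n : nat) : nat :=
  #|[set D : 'M[F]_n | is_differential D]|.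

Definition c_hom (F : finFieldType) (n r : nat) : nat :=
  #|[set D : 'M[F]_n | is_differential D && (homology_dim D == r)]|.

Definition p_hom (F : finFieldType) (n r : nat) : rat :=
  (c_hom F n r)%:R / (c_all F n)%:R.

(* Main.v *)
Require Import Defs.
From HB Require Import structures.
From mathcomp Require Import all_boot all_order all_algebra all_field.
From mathcomp Require Import ring lra zify.
Import Order.TTheory GRing.Theory Num.Theory.
Local Open Scope ring_scope.

Lemma card_sub_rV (F : finFieldType) n p (U : 'M[F]_(p, n)) :
  #|[set v : 'rV[F]_n | (v <= U)%MS]| = (#|F| ^ \rank U)%N.
Proof.
have -> : [set v : 'rV[F]_n | (v <= U)%MS] =
          [set w *m row_base U | w in 'rV[F]_(\rank U)].
  apply/setP => v; rewrite inE -(eq_row_base U).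
  apply/idP/imsetP => [/submxP [w ->] | [w _ ->]]; first by exists w.
  exact: submxMl.
rewrite card_imset ?card_mx ?mul1n //.
exact: row_free_inj (row_base_free U).
Qed.

Lemma card_free_sub (F : finFieldType) n p (U : 'M[F]_(p, n)) k :
  #|[set A : 'M[F]_(k, n) | row_free A && (A <= U)%MS]| =
  (\prod_(i < k) (#|F| ^ \rank U - #|F| ^ i))%N.
Proof.
elim: k => [|k IHk].
  rewrite big_ord0 (@eq_card1 _ (0 : 'M_(0, n))) // => A.
  rewrite !inE flatmx0 /row_free mxrank.unlock sub0mx eqxx /=; exact/esym/eqP.
rewrite big_ord_recr /= -IHk -[LHS]sum1_card.
set fr := [set A : 'M[F]_(k, n) | row_free A && (A <= U)%MS].
rewrite (partition_big (@dsubmx F 1 k n) (fun B => B \in fr)) /=; last first.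
  move=> A; rewrite !inE -{1 2}(vsubmxK A); move: (usubmx A) (dsubmx A) => Au Ad.

  move=> /andP [fA]; rewrite (col_mx_sub Au Ad U) => /andP [_ ->]; rewrite andbT.
  rewrite /row_free eqn_leq rank_leq_row /=.
  rewrite -(leq_add2l (\rank Au)) -mxrank_sum_cap.
  move: fA; rewrite /row_free addsmxE => /eqP ->.
  by rewrite (leq_trans (leq_add (rank_leq_row Au) (leqnn k))) // add1n leq_addr.
rewrite -sum_nat_const; apply: eq_bigr => B.
rewrite [B \in _]inE => /andP [fB sBU].
rewrite (reindex (col_mx^~ B)) /=; last first.
  exists usubmx => [v _ | vA]; first by rewrite col_mxKu.
  by case/andP=> _ /eqP <-; rewrite vsubmxK.
have -> : (#|F| ^ \rank U - #|F| ^ k = #|[set v : 'rV[F]_n | (v <= U)%MS] :\: [set v : 'rV[F]_n | (v <= B)%MS]|)%N.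
  rewrite cardsD card_sub_rV; congr (_ - _)%N.
  rewrite -{1}(eqP fB) -card_sub_rV; apply: eq_card => v; rewrite !inE.
  apply/idP/andP => [sv | [] //]; split => //; exact: submx_trans sBU.
rewrite -sum1_card; apply: eq_bigl => v; rewrite !inE col_mxKd eqxx andbT.

rewrite (col_mx_sub v B U) sBU andbT ; congr (_ && _).


rewrite /row_free eqn_leq rank_leq_row /= -(leq_add2r (\rank (v :&: B)%MS)).

rewrite -(addsmxE v B) mxrank_sum_cap (eqnP fB) addnC addnS -addSn leq_add2r.
rewrite (ltn_leqif (mxrank_leqif_sup _)) ?capmxSl // sub_capmx submx_refl.
by [].
Qed.


Definition Pq (q a k : nat) : nat := (\prod_(i < k) (q ^ a - q ^ i))%N.

Lemma card_units (F : finFieldType) k :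
  #|[set g : 'M[F]_k | g \in unitmx]| = Pq #|F| k k.
Proof.
rewrite /Pq; have := @card_free_sub F k k 1%:M k; rewrite mxrank1 => <-.
by apply: eq_card => g; rewrite !inE submx1 andbT row_free_unit.
Qed.

Lemma card_inner (F : finFieldType) n k (Y : 'M[F]_(k, n)) : row_free Y ->
  #|[set X : 'M[F]_(n, k) | (\rank X == k) && (Y *m X == 0)]| = Pq #|F| (n - k) k.
Proof.
move=> fY.
have rk : \rank (kermx Y^T) = (n - k)%N by rewrite mxrank_ker mxrank_tr (eqP fY).
rewrite /Pq -rk -card_free_sub.
have -> : [set X : 'M[F]_(n, k) | (\rank X == k) && (Y *m X == 0)] =
   [set A^T | A in [set A : 'M[F]_(k, n) | row_free A && (A <= kermx Y^T)%MS]].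
  apply/setP => X; rewrite inE; apply/idP/imsetP => [/andP [rX YX] | [A]].
    exists X^T; last by rewrite trmxK.
    by rewrite inE /row_free mxrank_tr rX sub_kermx -trmx_mul trmx_eq0.
  rewrite inE => /andP [fA sA] ->.
  by rewrite -mxrank_tr trmxK (eqP fA) eqxx -trmx_eq0 trmx_mul trmxK -sub_kermx.
by rewrite card_imset //; exact: trmx_inj.
Qed.

Definition Pairs (F : finFieldType) n k :=
  [set p : 'M[F]_(k, n) * 'M[F]_(n, k) |
     [&& row_free p.1, \rank p.2 == k & p.1 *m p.2 == 0]].

Lemma card_Pairs (F : finFieldType) n k :
  #|Pairs F n k| = (Pq #|F| n k * Pq #|F| (n - k) k)%N.
Proof.
rewrite -sum1_card.
have -> : (Pq #|F| n k = #|[set Y : 'M[F]_(k, n) | row_free Y]|)%N.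
  rewrite /Pq; have := @card_free_sub F n n 1%:M k; rewrite mxrank1 => <-.
  by apply: eq_card => Y; rewrite !inE submx1 andbT.
rewrite -sum_nat_const.
rewrite (eq_bigr (fun Y : 'M[F]_(k, n) => \sum_(X : 'M[F]_(n, k) | (\rank X == k) && (Y *m X == 0)%R) 1)%N); last first.
  by move=> Y; rewrite inE => fY; rewrite sum1dep_card card_inner.
rewrite pair_big_dep; apply: eq_bigl => p; rewrite !inE.
by [].
Qed.


Definition Sq (F : finFieldType) n k :=
  [set D : 'M[F]_n | (D *m D == 0) && (\rank D == k)].

Lemma factor_exists (F : fieldType) n k (D : 'M[F]_n) : \rank D = k ->
  exists Y : 'M[F]_(k, n), exists X : 'M[F]_(n, k),
    [/\ row_free Y, \rank X = k & X *m Y = D].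
Proof.
move=> rD.
have kn : (k <= n)%N by rewrite -rD rank_leq_row.
exists ((pid_mx k : 'M[F]_(k, n)) *m row_ebase D).
exists (col_ebase D *m (pid_mx k : 'M[F]_(n, k))).
have XY : col_ebase D *m (pid_mx k : 'M[F]_(n, k)) *m ((pid_mx k : 'M[F]_(k, n)) *m row_ebase D) = D.
  by rewrite mulmxA -(mulmxA (col_ebase D)) mul_pid_mx !minnn -rD mulmx_ebase.
split => //.
- rewrite /row_free eqn_leq rank_leq_row /= -{1}rD -{1}XY; exact: mxrankM_maxr.
- apply/eqP; rewrite eqn_leq rank_leq_col /= -{1}rD -{1}XY; exact: mxrankM_maxl.
Qed.

Lemma fiber_card (F : finFieldType) n k (D : 'M[F]_n) : D \in Sq F n k ->
  #|[set p | (p \in Pairs F n k) && (p.2 *m p.1 == D)]| =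
  #|[set g : 'M[F]_k | g \in unitmx]|.
Proof.
rewrite inE => /andP [/eqP DD /eqP rD].
have [Y0 [X0 [fY0 rX0 XY0]]] := @factor_exists F n k D rD.
have [C0 YC0] := row_freeP fY0.
have : row_full X0 by rewrite /row_full rX0.
case/row_fullP => B0 BX0.
have YX0 : Y0 *m X0 = 0.
  have := congr1 (fun M => B0 *m M *m C0) DD.
  by rewrite -XY0 !mulmxA BX0 mul1mx -!mulmxA YC0 mulmx1 mul0mx mulmx0.
have -> : [set p | (p \in Pairs F n k) && (p.2 *m p.1 == D)] =
   [set (invmx g *m Y0, X0 *m g) | g in [set g : 'M[F]_k | g \in unitmx]].
  apply/setP => [[Y X]]; rewrite !inE /=; apply/idP/imsetP.
    case/andP => /and3P [fY /eqP rX YX] /eqP XY.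
    have [C YC] := row_freeP fY.
    have eX : X0 *m (B0 *m X) = X.
      have XDC : X = X0 *m Y0 *m C by rewrite XY0 -XY -mulmxA YC mulmx1.
      by rewrite XDC !mulmxA -(mulmxA X0 B0 X0) BX0 mulmx1.
    have gu : B0 *m X \in unitmx.
      rewrite -row_free_unit /row_free eqn_leq rank_leq_row /= -{1}rX -{1}eX.
      exact: mxrankM_maxr.
    exists (B0 *m X); first by rewrite inE.
    congr (_, _) => //.
    have gY : B0 *m X *m Y = Y0 by rewrite -mulmxA XY -XY0 mulmxA BX0 mul1mx.
    by rewrite -gY mulmxA mulVmx ?mul1mx.
  case=> g; rewrite inE => gu [-> ->].
  have fg : row_free g by rewrite row_free_unit.
  apply/andP; split; last by rewrite mulmxA mulmxK // XY0.
  apply/and3P; split.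
  - rewrite /row_free eqn_leq rank_leq_row /= -{1}(eqP fY0).
    rewrite -{1}(mulKVmx gu Y0); exact: mxrankM_maxr.
  - by rewrite mxrankMfree // rX0.
  - by rewrite mulmxA -(mulmxA _ Y0) YX0 mulmx0 mul0mx.
rewrite card_imset //.
move=> g1 g2 [_] /(congr1 (mulmx B0)); rewrite !mulmxA BX0 !mul1mx.
by [].
Qed.

Lemma count_sqzero (F : finFieldType) n k :
  (#|Sq F n k| * Pq #|F| k k = Pq #|F| n k * Pq #|F| (n - k) k)%N.
Proof.
rewrite -card_Pairs -card_units -sum_nat_const -[RHS]sum1_card.
rewrite (partition_big (fun p : 'M[F]_(k, n) * 'M[F]_(n, k) => p.2 *m p.1)
          (fun D => D \in Sq F n k)) /=; last first.
  case=> Y X; rewrite !inE /= => /and3P [fY /eqP rX /eqP YX].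
  rewrite mxrankMfree // rX eqxx andbT.
  by rewrite mulmxA -(mulmxA X) YX mulmx0 mul0mx.
apply: eq_bigr => D SD; rewrite -(@fiber_card F n k D SD) -sum1_card.
by apply: eq_bigl => p; rewrite !inE.
Qed.


Definition Gq (q a : nat) : nat := (\prod_(1 <= j < a.+1) (q ^ j - 1))%N.

Lemma Gq_gt0 q a : (1 < q)%N -> (0 < Gq q a)%N.
Proof.
move=> q1; rewrite /Gq; elim: a => [|a IH]; first by rewrite big_geq.
rewrite big_nat_recr //= muln_gt0 IH /= subn_gt0.
by rewrite -{1}(expn0 q) ltn_exp2l.
Qed.

Lemma PG q a k : (1 < q)%N -> (k <= a)%N ->
  (Pq q a k * Gq q (a - k) = q ^ 'C(k, 2) * Gq q a)%N.
Proof.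
move=> q1; elim: k => [|k IH] ka.
  by rewrite /Pq big_ord0 subn0 bin0n expn0 !mul1n.
have ka' : (k <= a)%N by apply: ltnW.
have e : (a - k = (a - k.+1).+1)%N by rewrite subnS prednK // subn_gt0.
have pos : (0 < q ^ (a - k) - 1)%N by rewrite subn_gt0 -{1}(expn0 q) ltn_exp2l // subn_gt0.
apply/eqP; rewrite -(eqn_pmul2r pos); apply/eqP.
have HG : (Gq q (a - k) = Gq q (a - k.+1) * (q ^ (a - k) - 1))%N.
  by rewrite /Gq e big_nat_recr.
have HP : (Pq q a k.+1 = Pq q a k * (q ^ a - q ^ k))%N by rewrite /Pq big_ord_recr.
have Hq : (q ^ a - q ^ k = q ^ k * (q ^ (a - k) - 1))%N.
  by rewrite mulnBr muln1 -expnD subnKC.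
have HC : 'C(k.+1, 2) = ('C(k, 2) + k)%N by rewrite binS bin1.
rewrite HP -mulnA -HG.
rewrite mulnAC IH // HC expnD Hq.
ring.
Qed.

Lemma N_formula (F : finFieldType) n k : (2 * k <= n)%N ->
  (#|Sq F n k| * Gq #|F| k * Gq #|F| (n - 2 * k) =
   #|F| ^ 'C(k, 2) * Gq #|F| n)%N.
Proof.
move=> kn.
have q1 : (1 < #|F|)%N by exact: card_finNzRing_gt1.
set q := #|F|.
have kn' : (k <= n - k)%N by rewrite leq_subRL ?addnn -?mul2n // (leq_trans _ kn) // leq_pmull.
have kn1 : (k <= n)%N by rewrite (leq_trans kn') ?leq_subr.
have H := count_sqzero F n k.
have A1 := @PG q k k q1 (leqnn k).
rewrite subnn /Gq big_geq // muln1 -/(Gq q k) in A1.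
have A2 := @PG q n k q1 kn1.
have A3 := @PG q (n - k) k q1 kn'.
rewrite -subnDA addnn -mul2n in A3.
have pos : (0 < q ^ 'C(k, 2) * Gq q (n - k))%N by rewrite muln_gt0 expn_gt0 Gq_gt0 ?(ltnW q1).
apply/eqP; rewrite -(eqn_pmul2r pos); apply/eqP.
transitivity (#|Sq F n k| * (q ^ 'C(k, 2) * Gq q k) * Gq q (n - 2 * k) * Gq q (n - k))%N; first by ring.
rewrite -A1 H.
transitivity ((Pq q n k * Gq q (n - k)) * (Pq q (n - k) k * Gq q (n - 2 * k)))%N; first by ring.
rewrite A2 A3; ring.
Qed.


Lemma rank_sq (F : fieldType) n (D : 'M[F]_n) : D *m D == 0 ->
  (\rank D + \rank D <= n)%N.
Proof.
move=> DD; have : (D <= kermx D)%MS by rewrite sub_kermx.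
move/mxrankS; rewrite mxrank_ker => h.
have := rank_leq_row D; lia.
Qed.

Lemma chom_r (F : finFieldType) m r : (0 < r)%N ->
  c_hom F (2 * m + r) r = #|Sq F (2 * m + r) m|.
Proof.
move=> r0; apply: eq_card => D; rewrite !inE /is_differential /homology_dim.
case DD: (D *m D == 0) => //=; rewrite mxrank_ker.
have := @rank_sq _ _ D DD; move=> h; apply/eqP/eqP; lia.
Qed.

Lemma chom_0 (F : finFieldType) M :
  c_hom F (2 * M) 0 = #|Sq F (2 * M) M|.
Proof.
apply: eq_card => D; rewrite !inE /is_differential /homology_dim.
case DD: (D *m D == 0) => //=; rewrite mxrank_ker.
have := @rank_sq _ _ D DD; move=> h; apply/eqP/eqP; lia.
Qed.

Lemma call_pos (F : finFieldType) n : (0 < c_all F n)%N.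
Proof.
rewrite /c_all card_gt0; apply/set0Pn; exists 0.
by rewrite inE /is_differential mulmx0.
Qed.

Lemma ratio_id (q : nat) m s : (1 < q)%N ->
  let Q : rat := q%:R in
  (Q ^+ 'C(m, 2) * (Gq q (m + s))%:R) / (Q ^+ 'C(m + s, 2) * (Gq q m)%:R) =
  Q ^+ s * \prod_(1 <= j < s.+1) (1 - (Q ^+ (m + j))^-1).
Proof.
move=> q1 Q.
have Q0 : Q != 0 by rewrite pnatr_eq0 -lt0n ltnW.
have G0 : forall a, (Gq q a)%:R != 0 :> rat.
  by move=> a; rewrite pnatr_eq0 -lt0n Gq_gt0.
elim: s => [|s IH].
  by rewrite addn0 big_geq // expr0 !mulr1 divff // mulf_neq0 ?expf_neq0.
have HG : (Gq q (m + s).+1)%:R = (Gq q (m + s))%:R * (Q ^+ (m + s).+1 - 1) :> rat.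
  rewrite /Gq big_nat_recr //= natrM natrB ?natrX // expn_gt0 ltnW //.
have HC : 'C((m + s).+1, 2) = ('C(m + s, 2) + (m + s))%N by rewrite binS bin1.
rewrite big_nat_recr //= addnS HG HC exprD.
move: IH; set P := \prod_(1 <= j < s.+1) _; move=> IH.
have -> : P = (Q ^+ s)^-1 * (Q ^+ 'C(m, 2) * (Gq q (m + s))%:R / (Q ^+ 'C(m + s, 2) * (Gq q m)%:R)).
  by rewrite IH mulKf // expf_neq0.
rewrite !exprS.
field.
by rewrite !expf_neq0 // G0 Q0.
Qed.


Lemma GqR (q a : nat) : (0 < q)%N ->
  (Gq q a)%:R = \prod_(1 <= j < a.+1) ((q%:R : rat) ^+ j - 1).
Proof.
move=> q0; rewrite /Gq natr_prod; apply: eq_bigr => j _.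
by rewrite natrB ?natrX // expn_gt0 q0.
Qed.

Lemma part1 (F : finFieldType) (r m : nat) :
     ~~ odd r -> (2 <= r)%N ->
     let n := (2 * m + r)%N in
     let q : rat := (#|F|)%:R in
     p_hom F n r / p_hom F n 0 = (c_hom F n r)%:R / (c_hom F n 0)%:R /\
     (c_hom F n r)%:R / (c_hom F n 0)%:R =
       q ^+ (r./2) / (\prod_(1 <= j < r.+1) (q ^+ j - 1))
       * \prod_(1 <= j < (r./2).+1) (1 - (q ^+ (m + j))^-1).
Proof.
move=> er r2 n q.
have q1 : (1 < #|F|)%N by exact: card_finNzRing_gt1.
split.
  rewrite /p_hom invf_div mulrA divfK // pnatr_eq0 -lt0n; exact: call_pos.
set s := r./2.
have rs : r = (2 * s)%N by rewrite mul2n even_halfK.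
have G0 : forall a, (Gq #|F| a)%:R != 0 :> rat.
  by move=> a; rewrite pnatr_eq0 -lt0n Gq_gt0.
have qn0 : q != 0 by rewrite pnatr_eq0 -lt0n ltnW.
have E1 := @N_formula F n m (leq_addr _ _).
have nm : (n - 2 * m = r)%N by rewrite /n addKn.
rewrite nm in E1.
have nM : n = (2 * (m + s))%N by rewrite /n rs; lia.
have E2 := @N_formula F n (m + s) (eq_leq (esym nM)).
have e0 : (n - 2 * (m + s) = 0)%N by rewrite nM subnn.
rewrite e0 {2}/Gq big_geq // muln1 in E2.
rewrite (@chom_r F m r (ltnW r2)) -/n.
have -> : c_hom F n 0 = #|Sq F n (m + s)| by rewrite nM chom_0.
have cr : (#|Sq F n m|)%:R = q ^+ 'C(m, 2) * (Gq #|F| n)%:R / ((Gq #|F| m)%:R * (Gq #|F| r)%:R) :> rat.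
  by rewrite -natrX -!natrM -E1 !natrM -(mulrA _ (Gq _ m)%:R) mulfK // mulf_neq0.
have c0 : (#|Sq F n (m + s)|)%:R = q ^+ 'C(m + s, 2) * (Gq #|F| n)%:R / (Gq #|F| (m + s))%:R :> rat.
  by rewrite -natrX -!natrM -E2 natrM mulfK.
rewrite cr c0 -GqR ?(ltnW q1) // [RHS]mulrAC.

have := @ratio_id #|F| m s q1; rewrite -/q => <-.
field.
by rewrite !G0 !expf_neq0.
Qed.


Lemma weier (f : nat -> rat) a b :
  (forall j, (a <= j < b)%N -> 0 <= f j <= 1) ->
  1 - \sum_(a <= j < b) f j <= \prod_(a <= j < b) (1 - f j) <= 1.
Proof.
elim: b => [|b IH] hf.
  by rewrite !big_geq // subr0 lexx.
case: (leqP a b) => ab; last by rewrite !big_geq // subr0 lexx.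
rewrite big_nat_recr // big_nat_recr //=.
have /andP [l u] : 1 - \sum_(a <= j < b) f j <= \prod_(a <= j < b) (1 - f j) <= 1.
  by apply: IH => j /andP [aj jb]; apply: hf; rewrite aj ltnW.
have /andP [f0 f1] : 0 <= f b <= 1 by apply: hf; rewrite ab ltnSn.
move: l u f0 f1; set P := \prod_(a <= j < b) _; set S := \sum_(a <= j < b) _.
move=> l u f0 f1; apply/andP; split; nra.
Qed.

Lemma sum_pow_le (x : rat) a b (e : nat -> nat) : 0 <= x <= 1 ->
  (forall j, (a <= j)%N -> (0 < e j)%N) ->
  \sum_(a <= j < b) x ^+ e j <= x *+ (b - a).
Proof.
move=> /andP [x0 x1] he.
rewrite -sumr_const_nat; apply: ler_sum_nat => j /andP [hj _].
have := he j hj; case: (e j) => // k _.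
by rewrite exprS ler_piMr ?exprn_ile1 ?exprn_ge0.
Qed.

Lemma prod_q (q : rat) K : q != 0 ->
  \prod_(1 <= j < K.+1) (q ^+ j - 1) =
  q ^+ 'C(K.+1, 2) * \prod_(1 <= j < K.+1) (1 - (q^-1) ^+ j).
Proof.
move=> q0; elim: K => [|K IH]; first by rewrite !big_geq // mulr1 expr0.
have HC : 'C(K.+2, 2) = ('C(K.+1, 2) + K.+1)%N by rewrite binS bin1.
rewrite big_nat_recr //= IH (big_nat_recr K.+1) //= HC exprD.
rewrite exprVn.
set P := \prod_(1 <= j < K.+1) _.
have qK : q ^+ K.+1 != 0 by rewrite expf_neq0.
field.
exact: qK.
Qed.


Lemma binC_eq s : 'C((2 * s).+1, 2) = (s + ((2 * s) * (2 * s))./2)%N.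
Proof.
have e1 : ((2 * s) * (2 * s) = (2 * s * s).*2)%N by rewrite -mul2n; ring.
have e2 : ((2 * s).+1 * (2 * s) = (s + 2 * s * s).*2)%N by rewrite -mul2n; ring.
by rewrite bin2 /= e1 e2 !doubleK.
Qed.

Lemma part2 : (forall (r m : nat), ~~ odd r -> (2 <= r)%N ->
     let n := (2 * m + r)%N in
     forall eps : rat, 0 < eps ->
     exists Q : nat, forall F : finFieldType, (Q <= #|F|)%N ->
       `| p_hom F n r / p_hom F n 0 * (#|F|)%:R ^+ ((r * r)./2) - 1 | < eps).
Proof.
move=> r m er r2 n eps e0.
set s := r./2.
have rs : r = (2 * s)%N by rewrite mul2n even_halfK.
set bnd := Num.Def.archi_bound (4%:R * s%:R / eps : rat).
have hb : 4%:R * s%:R / eps < bnd%:R :> rat.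
  by apply: archi_boundP; apply: divr_ge0; [rewrite -natrM ler0n | exact: ltW].
exists (bnd + (4 * s).+1)%N => F hq.
have [h1 h2] := @part1 F r m er r2.
rewrite /n h1 h2.
set q : rat := #|F|%:R.
have qge : bnd%:R + (4 * s).+1%:R <= q by rewrite -natrD ler_nat.
have q0 : 0 < q by apply: lt_le_trans qge; rewrite ltr_wpDl.
have qn0 : q != 0 by rewrite gt_eqF.
set x := q^-1.
have x0 : 0 < x by rewrite invr_gt0.
have xq : x * q = 1 by rewrite mulVf.
have hC : 'C(r.+1, 2) = (s + (r * r)./2)%N by rewrite rs binC_eq.
rewrite prod_q // -/x hC exprD.
set A := \prod_(1 <= j < s.+1) _.
set B := \prod_(1 <= j < r.+1) _.
have x1 : x <= 1.
  rewrite invr_le1 // ?unitfE //; apply: le_trans qge; rewrite -natrD ler1n addnS //.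
have : 1 - \sum_(1 <= j < s.+1) (q ^+ (m + j))^-1 <= A <= 1.
  by apply: (@weier (fun j => (q ^+ (m + j))^-1)) => j _; rewrite -exprVn -/x exprn_ge0 ?exprn_ile1 ?(ltW x0).
case/andP => lA uA.
have : 1 - \sum_(1 <= j < r.+1) x ^+ j <= B <= 1.
  by apply: (@weier (fun j => x ^+ j)) => j _; rewrite exprn_ge0 ?exprn_ile1 ?(ltW x0).
case/andP => lB uB.
have sA : \sum_(1 <= j < s.+1) (q ^+ (m + j))^-1 <= x *+ s.
  rewrite (eq_bigr (fun j => x ^+ (m + j))); last by move=> j _; rewrite exprVn.
  apply: le_trans (@sum_pow_le x 1 s.+1 (fun j => (m + j)%N) _ _) _.
  - by rewrite (ltW x0) x1.
  - by move=> j hj; rewrite addn_gt0 hj orbT.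
  - by rewrite subn1.
have sB : \sum_(1 <= j < r.+1) x ^+ j <= x *+ r.
  apply: le_trans (@sum_pow_le x 1 r.+1 (fun j => j) _ _) _.
  - by rewrite (ltW x0) x1.
  - by [].
  - by rewrite subn1.
have xs : x *+ s = s%:R * x by rewrite mulr_natl.
have xr : x *+ r = 2 * (s%:R * x).
  by rewrite -[LHS]mulr_natl rs natrM; ring.
rewrite xs in sA; rewrite xr in sB.
have hs : r./2 = s by [].
rewrite hs.
have h4 : 4 * s%:R < q * eps.
  rewrite -ltr_pdivrMr //; apply: lt_le_trans hb _; apply: le_trans qge.
  by rewrite lerDl.
have h5 : 4 * (s%:R * x) < eps.
  have h : 4 * s%:R * x < q * eps * x by rewrite ltr_pM2r.
  have e : q * eps * x = eps by rewrite mulrAC (mulrC q) xq mul1r.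
  by rewrite mulrA; apply: (lt_le_trans h); rewrite e.
have h6 : 4 * (s%:R * x) <= 1.
  have : (4 * s).+1%:R * x <= q * x by rewrite ler_pM2r //; apply: le_trans qge; rewrite lerDr.
  rewrite (mulrC q) xq -addn1 natrD natrM mulrDl mul1r => h7.
  by apply: le_trans h7; rewrite mulrA lerDl ltW.
move: h5 h6 sA sB lA lB; set y := s%:R * x; set SA := \sum_(1 <= j < s.+1) _; set SB := \sum_(1 <= j < r.+1) _.
move=> h5 h6 sA sB lA lB.
have Bpos : 0 < B by lra.
have -> : q ^+ s / (q ^+ s * q ^+ (r * r)./2 * B) * A * q ^+ (r * r)./2 - 1 = (A - B) / B.
  by field; rewrite (gt_eqF Bpos) !expf_neq0.
rewrite normrM normfV (gtr0_norm Bpos) ltr_pdivrMr // ltr_norml.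
apply/andP; split; nra.
Qed.


Theorem mainTheorem6 :
  (forall (F : finFieldType) (r m : nat),
     ~~ odd r -> (2 <= r)%N ->
     let n := (2 * m + r)%N in
     let q : rat := (#|F|)%:R in
     p_hom F n r / p_hom F n 0 = (c_hom F n r)%:R / (c_hom F n 0)%:R /\
     (c_hom F n r)%:R / (c_hom F n 0)%:R =
       q ^+ (r./2) / (\prod_(1 <= j < r.+1) (q ^+ j - 1))
       * \prod_(1 <= j < (r./2).+1) (1 - (q ^+ (m + j))^-1))
  /\
  (* asymptotic: p_r/p_0 ~ q^{-r^2/2} as q -> oo, for fixed even n and even r >= 2 *)
  (forall (r m : nat), ~~ odd r -> (2 <= r)%N ->
     let n := (2 * m + r)%N in
     forall eps : rat, 0 < eps ->
     exists Q : nat, forall F : finFieldType, (Q <= #|F|)%N ->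
       `| p_hom F n r / p_hom F n 0 * (#|F|)%:R ^+ ((r * r)./2) - 1 | < eps).
Proof.
split; [exact: part1 | exact: part2].
Qed.
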